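(* Let $G$ be a second countable locally compact Hausdorff groupoid with a fixed left Haar system $\lambda=\{\lambda^u\}_{u\in G^0}$, and let $(\Phi,\Psi)$ be a complementary pair of $N$-functions both satisfying the $\Delta_2$-condition. Then $\check A_\Phi(G)$ is a left and right $C_0(G^0)$-module under the actions $(bh)(x)=b(d(x))h(x)$ and $(hb)(x)=h(x)b(r(x))$ for $b\in C_0(G^0)$, $h\in\check A_\Phi(G)$; that is, $bh,hb\in\check A_\Phi(G)$ for all such $b,h$.
   Context: $G^0$ is the unit space, $r(x)=xx^{-1}$, $d(x)=x^{-1}x$, $G^u=r^{-1}(u)$; the left Haar system consists of positive Radon measures $\lambda^u$ with support $G^u$, $u\mapsto\int f d\lambda^u$ continuous for $f\in C_c(G)$, and $\int f(xy)d\lambda^{d(x)}(y)=\int f(y)d\lambda^{r(x)}(y)$. An $N$-function is a continuous even convex $\Phi:\mathbb R\to[0,\infty)$ with $\Phi(x)=0$ iff $x=0$, $\Phi(x)/x\to0$ as $x\to0$, $\to\infty$ as $x\to\infty$; complementary function $\Psi(y)=\sup_{x\ge0}(x|y|-\Phi(x))$. $\Delta_2$: there is $k>0$ with $\Phi(2x)\le k\Phi(x)$ for all $x\ge0$ ($G$ non-compact), resp. for $x\ge x_0$, some $x_0>0$ ($G$ compact). For $u\in G^0$, $L^\Phi(G^u)$ is the space of measurable $f$ on $G^u$ with $\int\Phi(\alpha|f|)d\lambda^u<\infty$ for some $\alpha>0$, gauge norm $\|f\|^0_\Phi=\inf\{k>0:\int\Phi(|f|/k)d\lambda^u\le1\}$;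 similarly for $\Psi$. For $f\in C_c(G)$, $f^u=f|_{G^u}$ and $\check f(x)=f(x^{-1})$. $E_0^\Phi$ (resp. $E_0^\Psi$) is the Banach space of sections $\xi=(\xi^u)$ with $\xi^u\in L^\Phi(G^u)$ (resp. $L^\Psi(G^u)$), locally close to $C_c(G)$ in the gauge norm, with $u\mapsto\|\xi^u\|^0$ vanishing at infinity, normed by $\sup_u\|\xi^u\|^0$. $\mathcal K(G)$ is the collection of compact subsets of $G$ with nonempty interior intersecting $G^0$. For $P\in\mathcal K(G)$, $E_0^\Phi(P)$ (resp. $E_0^\Psi(P)$) is the closure in $E_0^\Phi$ (resp. $E_0^\Psi$) of $\{f\in C_c(G):\operatorname{supp}f\subseteq P\}$. For $g\in E_0^\Psi(P)$, $f\in E_0^\Phi(P)$, $(g*\check f)(x)=\int_{G^{r(x)}}g^{r(x)}(y)f^{d(x)}(x^{-1}y)d\lambda^{r(x)}(y)$. $\check A_{\Phi,P}(G)$ is the set of $h\in C_c(G)$ of the form $h=\sum_{n=1}^\infty g_n*\check f_n$ with $f_n\in E_0^\Phi(P)$, $g_n\in E_0^\Psi(P)$ and $\sum_n\|f_n\|^0_\Phi\|g_n\|^0_\Psi<\infty$, and $\check A_\Phi(G)=\bigcup_{P\in\mathcal K(G)}\check A_{\Phi,P}(G)$. *)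

(* Defs.v *)
From HB Require Import structures.
From mathcomp Require Import all_boot all_order all_algebra.
From mathcomp Require Import all_classical all_reals all_analysis.
From mathcomp Require Import complex.
Import Order.TTheory GRing.Theory Num.Theory.
Import numFieldNormedType.Exports.

Set Implicit Arguments.
Unset Strict Implicit.
Unset Printing Implicit Defensive.

Local Open Scope ring_scope.
Local Open Scope classical_set_scope.

(* Topological groupoids (Paterson's axioms, composable pairs G^(2)   *)
(* given by the relation [gcomp]).                                    *)
Record topological_groupoid (T : topologicalType) := TGroupoid {
  gcomp : T -> T -> Prop;
  gmul  : T -> T -> T;               (* x y, meaningful on G^(2) *)
  ginv  : T -> T;
  gassoc : forall x y z, gcomp x y -> gcomp y z ->
    [/\ gcomp (gmul x y) z, gcomp x (gmul y z) &
        gmul (gmul x y) z = gmul x (gmul y z)];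
  ginvK : forall x, ginv (ginv x) = x;
  gcomp_inv : forall x, gcomp (ginv x) x;
  gcancel : forall x y, gcomp x y ->
    gmul (ginv x) (gmul x y) = y /\ gmul (gmul x y) (ginv y) = x;
  ginv_cont : continuous ginv;
  gmul_cont : {within [set p : T * T | gcomp p.1 p.2],
                 continuous (fun p : T * T => gmul p.1 p.2)} }.

Section GroupoidDefs.
Variables (T : topologicalType) (G : topological_groupoid T).

Definition grange (x : T) : T := gmul G x (ginv G x).
Definition gsource (x : T) : T := gmul G (ginv G x) x.
Definition unit_space : set T := [set u | exists x, grange x = u].
Definition fiber (u : T) : set T := [set x | grange x = u].

End GroupoidDefs.

Notation borelT T := (g_sigma_algebraType (@open T)).

Section Haar.
Variables (R : realType) (T : ptopologicalType) (G : topological_groupoid T).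

Definition support (f : T -> R) : set T := closure [set x | f x != 0].

Definition Cc_real (f : T -> R) := continuous f /\ compact (support f).

Definition radon (mu : {measure set (borelT T) -> \bar R}) :=
  [/\ (forall K : set T, compact K -> (mu K < +oo)%E),
      (forall A : set (borelT T), measurable A ->
          mu A = ereal_inf [set mu U | U in [set U : set T | open U /\ A `<=` U]]) &
      (forall U : set T, open U ->
          mu U = ereal_sup [set mu K | K in [set K : set T | compact K /\ K `<=` U]])].

Definition measure_support_is (mu : {measure set (borelT T) -> \bar R})
  (A : set T) :=
  forall x, (forall U : set T, open U -> U x -> (0 < mu U)%E) <-> A x.

Definition left_haar_system (lam : T -> {measure set (borelT T) -> \bar R}) :=
  [/\ (forall u, unit_space G u -> radon (lam u)),
      (forall u, unit_space G u -> measure_support_is (lam u) (fiber G u)),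
      (forall f, Cc_real f ->
         {within unit_space G, continuous (fun u => Rintegral (lam u) setT f)}) &
      (forall x f, Cc_real f ->
         Rintegral (lam (gsource G x)) (fiber G (gsource G x))
                   (fun y => f (gmul G x y))
         = Rintegral (lam (grange G x)) setT f)].

End Haar.

Section NFun.
Variable (R : realType).

Definition Nfunction (Phi : R -> R) :=
  [/\ [/\ continuous Phi, (forall x, Phi (- x) = Phi x) & (forall x, 0 <= Phi x)],
      (forall x y t : R, 0 <= t <= 1 ->
          Phi (t * x + (1 - t) * y) <= t * Phi x + (1 - t) * Phi y),
      (forall x, (Phi x = 0) <-> (x = 0)),
      ((fun x => Phi x / x) @ 0^' --> (0 : R)) &
      ((fun x => Phi x / x) @ +oo%R --> +oo%R)].

Definition complementary (Phi Psi : R -> R) :=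
  forall y, Psi y = sup [set x * `|y| - Phi x | x in [set x : R | 0 <= x]].

Definition Delta2 (T : topologicalType) (Phi : R -> R) :=
  (~ compact [set: T] ->
     exists k : R, 0 < k /\ forall x, 0 <= x -> Phi (2 * x) <= k * Phi x) /\
  (compact [set: T] ->
     exists k x0 : R, [/\ 0 < k, 0 < x0 &
        forall x, x0 <= x -> Phi (2 * x) <= k * Phi x]).

End NFun.

Section Complex.
Variables (R : realType).

Definition cre (z : R[i]) : R := complex.Re z.
Definition cim (z : R[i]) : R := complex.Im z.
Definition cabs (z : R[i]) : R := Num.sqrt (cre z ^+ 2 + cim z ^+ 2).

Variable (T : ptopologicalType).

Definition ccontinuous (f : T -> R[i]) :=
  continuous (fun x => cre (f x)) /\ continuous (fun x => cim (f x)).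

Definition csupport (f : T -> R[i]) : set T := closure [set x | f x != 0].

Definition Cc (f : T -> R[i]) := ccontinuous f /\ compact (csupport f).

Definition cmeasurable (A : set (borelT T)) (f : T -> R[i]) :=
  measurable_fun A (fun x => cre (f x)) /\ measurable_fun A (fun x => cim (f x)).

Definition cintegral (mu : {measure set (borelT T) -> \bar R}) (A : set T)
  (f : T -> R[i]) : R[i] :=
  Complex (Rintegral mu A (fun x => cre (f x))) (Rintegral mu A (fun x => cim (f x))).

End Complex.

Section Orlicz.
Variables (R : realType) (T : ptopologicalType) (G : topological_groupoid T)
  (lam : T -> {measure set (borelT T) -> \bar R}).

Local Notation G0 := (unit_space G).
Local Notation Gu := (fiber G).

Definition inL (Phi : R -> R) (u : T) (f : T -> R[i]) :=
  cmeasurable (Gu u) f /\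
  exists alpha : R, 0 < alpha /\
    (\int[lam u]_(x in Gu u) (Phi (alpha * cabs (f x)))%:E < +oo)%E.

Definition gauge (Phi : R -> R) (u : T) (f : T -> R[i]) : \bar R :=
  ereal_inf [set k%:E | k in [set k : R | 0 < k /\
    (\int[lam u]_(x in Gu u) (Phi (cabs (f x) / k))%:E <= 1)%E]].

(* a section xi = (xi^u) is represented by a single function on G,
   xi^u being its restriction to G^u *)
Definition inE0 (Phi : R -> R) (xi : T -> R[i]) :=
  [/\ (forall u, G0 u -> inL Phi u xi),
      (forall u, G0 u -> forall eps : R, 0 < eps ->
         exists f, Cc f /\ exists U : set T, [/\ open U, U u &
           forall v, G0 v -> U v -> (gauge Phi v (fun x => (xi x - f x)%R) < eps%:E)%E]) &
      (forall eps : R, 0 < eps -> exists K : set T, [/\ compact K, K `<=` G0 &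
         forall u, G0 u -> ~ K u -> (gauge Phi u xi < eps%:E)%E])].

Definition E0norm (Phi : R -> R) (xi : T -> R[i]) : \bar R :=
  ereal_sup [set gauge Phi u xi | u in G0].

Definition inE0P (Phi : R -> R) (P : set T) (xi : T -> R[i]) :=
  inE0 Phi xi /\
  forall eps : R, 0 < eps -> exists f, [/\ Cc f, csupport f `<=` P &
     (E0norm Phi (fun x => (xi x - f x)%R) < eps%:E)%E].

Definition KG (P : set T) := compact P /\ (P° `&` G0 !=set0).

Definition gconv (g f : T -> R[i]) (x : T) : R[i] :=
  cintegral (lam (grange G x)) (Gu (grange G x))
    (fun y => g y * f (gmul G (ginv G x) y)).

Definition inAP (Phi Psi : R -> R) (P : set T) (h : T -> R[i]) :=
  Cc h /\
  exists (f g : nat -> T -> R[i]),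
    [/\ (forall n, inE0P Phi P (f n)),
        (forall n, inE0P Psi P (g n)),
        (\sum_(0 <= n <oo) (E0norm Phi (f n) * E0norm Psi (g n)) < +oo)%E &
        forall x,
          (fun N => \sum_(n < N) cre (gconv (g n) (f n) x)) @ \oo --> cre (h x) /\
          (fun N => \sum_(n < N) cim (gconv (g n) (f n) x)) @ \oo --> cim (h x)].

Definition inA (Phi Psi : R -> R) (h : T -> R[i]) :=
  exists P, KG P /\ inAP Phi Psi P h.

End Orlicz.

Definition C0_units (R : realType) (T : ptopologicalType)
  (G : topological_groupoid T) (b : T -> R[i]) :=
  {within unit_space G, continuous (fun x => cre (b x))} /\
  {within unit_space G, continuous (fun x => cim (b x))} /\
  (forall eps : R, 0 < eps -> exists K : set T,
     [/\ compact K, K `<=` unit_space G &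
      forall u, unit_space G u -> ~ K u -> cabs (b u) < eps]).

(* Main.v *)
Require Import Defs.
From HB Require Import structures.
From mathcomp Require Import all_boot all_order all_algebra.
From mathcomp Require Import all_classical all_reals all_analysis.
From mathcomp Require Import complex.
From mathcomp Require Import ring lra.
Import Order.TTheory GRing.Theory Num.Theory.
Import numFieldNormedType.Exports.
Local Open Scope ring_scope.
Local Open Scope classical_set_scope.

Section Grp.
Variables (T : topologicalType) (G : topological_groupoid T).
Local Notation gm := (gmul G).
Local Notation gi := (ginv G).

Lemma gcomp_r z : gcomp G z (gi z).
Proof. by have := gcomp_inv G (gi z); rewrite ginvK. Qed.

Lemma gcomp_rz z : gcomp G (grange G z) z /\ gm (grange G z) z = z.
Proof.
have [h1 _ _] := gassoc (gcomp_r z) (gcomp_inv G z).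
split => //; have [_ ] := gcancel (gcomp_r z); by rewrite ginvK.
Qed.

Lemma gcomp_zd z : gcomp G z (gsource G z).
Proof. by have [_ h2 _] := gassoc (gcomp_r z) (gcomp_inv G z). Qed.

Lemma gcomp_of u v : gsource G u = grange G v -> gcomp G u v.
Proof.
move=> e; have h1 := gcomp_zd u; rewrite e in h1.
have [h2 h3] := gcomp_rz v.
by have [_ + _] := gassoc h1 h2; rewrite h3.
Qed.

Lemma grange_mul u v : gcomp G u v -> grange G (gm u v) = grange G u.
Proof.
move=> cuv; set w := gm u v.
have [cw1 cw2 e1] := gassoc cuv (gcomp_r v).
have wu : gm w (gi v) = u by have [_ ->] := gcancel cuv.
have [rw1 rw2] := gcomp_rz w.
have [c3 c4 e3] := gassoc rw1 cw1.
rewrite -/w wu in c4 e3; rewrite rw2 wu in e3.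
have [_ ] := gcancel c4; rewrite -e3 => <-; by [].
Qed.

Lemma grange_inv x : grange G (gi x) = gsource G x.
Proof. by rewrite /grange /gsource ginvK. Qed.

Lemma key_r x y : grange G y = grange G x ->
  grange G (gm (gi x) y) = gsource G x.
Proof.
move=> e; have c : gcomp G (gi x) y.
  by apply: gcomp_of; rewrite /gsource ginvK e.
by rewrite grange_mul // grange_inv.
Qed.

Lemma within_comp (S U : topologicalType) (A : set S) (f : S -> U) (p : T -> S) :
  {within A, continuous f} -> continuous p -> (forall x, A (p x)) ->
  continuous (f \o p).
Proof.
move=> fc pc pA x; move/subspace_continuousP: fc => fc.
have h : p @ nbhs x --> within A (nbhs (p x)).
  move=> W /=; rewrite /within /= => /pc /=; rewrite nbhs_simpl /=.
  by apply: filterS => y /(_ (pA y)).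
exact: (cvg_trans (cvg_app f h) (fc _ (pA x))).
Qed.

Lemma grange_cont : continuous (grange G).
Proof.
have -> : grange G = (fun p : T * T => gm p.1 p.2) \o (fun x => (x, gi x)).
  by apply/funext.
have := @within_comp _ _ _ _ (fun x => (x, gi x)) (@gmul_cont _ G).
apply.
  move=> x; apply: cvg_pair; [exact: cvg_id| exact: ginv_cont].
by move=> x; exact: gcomp_r.
Qed.

Lemma gsource_cont : continuous (gsource G).
Proof.
have -> : gsource G = grange G \o gi by apply/funext => x /=; rewrite grange_inv.
by move=> x; apply: continuous_comp; [exact: ginv_cont|exact: grange_cont].
Qed.

End Grp.

Section Integ.
Import HBNNSimple.
Context d (X : measurableType d) (R : realType) (mu : {measure set X -> \bar R}).

Lemma nn_le_integral D (f g : X -> \bar R) : (forall x, D x -> (0 <= f x)%E) ->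
  (forall x, D x -> (f x <= g x)%E) ->
  (\int[mu]_(x in D) f x <= \int[mu]_(x in D) g x)%E.
Proof.
move=> f0 fg.
have g0 x : D x -> (0 <= g x)%E by move=> Dx; exact: le_trans (f0 _ Dx) (fg _ Dx).
rewrite (ge0_integralE mu f0) (ge0_integralE mu g0) /=.
apply: ereal_sup_le => _ [h hf <-]; exists h => //= x.
apply: le_trans (hf x) _; rewrite /patch; case: ifPn => //; rewrite inE => Dx.
exact: fg.
Qed.

Lemma nn_integralZ D (f : X -> \bar R) (k : R) : 0 < k ->
  (forall x, D x -> (0 <= f x)%E) ->
  (\int[mu]_(x in D) (k%:E * f x) = k%:E * \int[mu]_(x in D) f x)%E.
Proof.
move=> k0 f0.
have kf0 x : D x -> (0 <= k%:E * f x)%E.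
  by move=> Dx; apply: mule_ge0; [rewrite lee_fin ltW|exact: f0].
rewrite (ge0_integralE mu kf0) (ge0_integralE mu f0) /= erestrict_scale.
rewrite -ereal_sup_pZl //.
apply/eqP; rewrite eq_le; apply/andP; split.
- apply: ub_ereal_sup => _ [h hf <-].
  have ki0 : 0 <= k^-1 by rewrite invr_ge0 ltW.
  set h' := scale_nnsfun h ki0.
  have -> : sintegral mu (h) = sintegral mu (cst k \* h').
    congr (sintegral mu _); apply/funext => x /=.
    by rewrite mulrA divff ?mul1r // gt_eqF.
  rewrite sintegralrM; apply: ereal_sup_ubound; exists (sintegral mu h') => //.
  exists h' => // x /=.
  by rewrite EFinM lee_pdivrMl //; exact: hf.
- apply: ereal_sup_le => _ [_ [h hf <-] <-].
  exists (scale_nnsfun h (ltW k0)); last by rewrite -sintegralrM.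
  by move=> x /=; rewrite EFinM lee_pmul2l ?lte_fin //.
Qed.

Lemma fineBN (x y : \bar R) : (0 <= x)%E -> (0 <= y)%E ->
  fine (x - y)%E = - fine (y - x)%E.
Proof.
case: x => [x||] //; case: y => [y||] //= *; by rewrite ?opprB ?oppr0.
Qed.

Lemma fineZB (k : R) (x y : \bar R) : 0 < k -> (0 <= x)%E -> (0 <= y)%E ->
  fine (k%:E * x - k%:E * y)%E = k * fine (x - y)%E.
Proof.
move=> k0.
have ky : (k%:E * +oo = +oo)%E by rewrite mulry gtr0_sg // mul1e.
case: x => [x||] //; case: y => [y||] //= *; rewrite ?ky //= ?mulr0 //.
by rewrite mulrBr.
Qed.

Lemma Rintegral_scale D (f : X -> R) (k : R) :
  Rintegral mu D (fun x => k * f x) = k * Rintegral mu D f.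
Proof.
rewrite /Rintegral.
have [k0|k0|<-] := ltgtP 0 k; last first.
  have -> : (fun x => (0 * f x)%:E) = cst 0%E.
    by apply/funext => x; rewrite mul0r.
  by rewrite integral0 mul0r.
- rewrite integralE [in RHS]integralE.
  have -> : (fun x => (k * f x)%:E) = (fun x => k%:E * (f x)%:E)%E.
    by apply/funext => x; rewrite EFinM.
  rewrite le0_funeposM ?le0_funenegM ?ltW // -EFinN.
  rewrite !nn_integralZ ?oppr_gt0 //.
  all: try (by move=> *; apply: funepos_ge0); try (by move=> *; apply: funeneg_ge0).
  rewrite fineZB ?oppr_gt0 ?integral_ge0 //.
  all: try (by move=> *; apply: funepos_ge0); try (by move=> *; apply: funeneg_ge0).
  rewrite fineBN ?integral_ge0 //.
  all: try (by move=> *; apply: funepos_ge0); try (by move=> *; apply: funeneg_ge0).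
  by rewrite mulrNN.
- rewrite integralE [in RHS]integralE.
  have -> : (fun x => (k * f x)%:E) = (fun x => k%:E * (f x)%:E)%E.
    by apply/funext => x; rewrite EFinM.
  rewrite ge0_funeposM ?ge0_funenegM ?ltW //.
  rewrite !nn_integralZ //.
  all: try (by move=> *; apply: funepos_ge0); try (by move=> *; apply: funeneg_ge0).
  rewrite fineZB ?integral_ge0 //.
  all: try (by move=> *; apply: funepos_ge0); try (by move=> *; apply: funeneg_ge0).
Qed.
End Integ.

Section Cplx.
Variable R : realType.
Implicit Types a b z : R[i].

Lemma cabs_ge0 z : 0 <= cabs z.
Proof. exact: sqrtr_ge0. Qed.

Lemma cabsM a b : cabs (a * b) = cabs a * cabs b.
Proof.
case: a => a1 a2; case: b => b1 b2; rewrite /cabs /cre /cim /=.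
rewrite -sqrtrM ?addr_ge0 ?sqr_ge0 //; congr Num.sqrt; ring.
Qed.

Lemma cre_le z : `|cre z| <= cabs z.
Proof.
rewrite /cabs -sqrtr_sqr; apply: ler_wsqrtr; rewrite lerDl sqr_ge0 //.
Qed.

Lemma cim_le z : `|cim z| <= cabs z.
Proof.
rewrite /cabs -sqrtr_sqr; apply: ler_wsqrtr; rewrite lerDr sqr_ge0 //.
Qed.

Lemma cabs_real (a : R) : cabs (Complex a 0) = `|a|.
Proof. by rewrite /cabs /cre /cim /= expr0n /= addr0 sqrtr_sqr. Qed.

Lemma cabs_I : cabs (Complex 0 1 : R[i]) = 1.
Proof. by rewrite /cabs /cre /cim /= expr0n /= expr1n add0r sqrtr1. Qed.

Lemma cabs0 : cabs (0 : R[i]) = 0.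
Proof. by rewrite /cabs /cre /cim /= expr0n /= addr0 sqrtr0. Qed.

Lemma Nfun_Phi0 (Phi : R -> R) : Nfunction Phi -> Phi 0 = 0.
Proof. by case=> _ _ h _ _; apply/h. Qed.

Lemma Nfun_ge0 (Phi : R -> R) x : Nfunction Phi -> 0 <= Phi x.
Proof. by case=> [[_ _ h]] _ _ _ _. Qed.

Lemma Nfun_mono (Phi : R -> R) x y : Nfunction Phi -> 0 <= x -> x <= y ->
  Phi x <= Phi y.
Proof.
move=> NP x0 xy; have [y0|] := eqVneq y 0.
  have -> : x = y by apply/eqP; rewrite eq_le xy y0 x0.
  by [].
move=> yn0; have yp : 0 < y by rewrite lt_neqAle eq_sym yn0 (le_trans x0 xy).
have [_ cvx _ _ _] := NP.
have t01 : 0 <= x / y <= 1 by rewrite divr_ge0 ?(ltW yp) //= ler_pdivrMr // mul1r.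

have := cvx y 0 _ t01; rewrite mulr0 addr0 mulfVK ?gt_eqF // (Nfun_Phi0 _ NP) mulr0 addr0.
move=> /le_trans; apply; apply: ler_piMl; [exact: Nfun_ge0|by case/andP: t01].
Qed.

End Cplx.

Section Gauge.
Variables (R : realType) (T : ptopologicalType) (G : topological_groupoid T)
  (lam : T -> {measure set (borelT T) -> \bar R}).

Lemma gauge_le (Phi : R -> R) u (f f' : T -> R[i]) (M : R) :
  Nfunction Phi -> 0 < M ->
  (forall x, fiber G u x -> cabs (f' x) <= M * cabs (f x)) ->
  (gauge G lam Phi u f' <= M%:E * gauge G lam Phi u f)%E.
Proof.
move=> NP M0 fM; rewrite /gauge -ereal_inf_pZl //.
apply: ereal_inf_le_tmp => _ [_ [k [k0 hk] <-] <-].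
exists (M * k); last by rewrite EFinM.
split; first by rewrite mulr_gt0.
apply: le_trans hk; apply: nn_le_integral => x Dx.
  by rewrite lee_fin Nfun_ge0.
rewrite lee_fin; apply: Nfun_mono => //.
  by rewrite divr_ge0 ?cabs_ge0 // ltW // mulr_gt0.
rewrite invfM mulrA ler_pM2r ?invr_gt0 // ler_pdivrMr // mulrC; exact: fM.
Qed.

Lemma gauge_ge0 (Phi : R -> R) u f : (0 <= gauge G lam Phi u f)%E.
Proof.
apply: le_ereal_inf_tmp => _ [k [k0 _] <-]; by rewrite lee_fin ltW.
Qed.

Lemma E0norm_le (Phi : R -> R) (f f' : T -> R[i]) (M : R) : 0 < M ->
  (forall u, unit_space G u -> (gauge G lam Phi u f' <= M%:E * gauge G lam Phi u f)%E) ->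
  (E0norm G lam Phi f' <= M%:E * E0norm G lam Phi f)%E.
Proof.
move=> M0 h; rewrite /E0norm; apply: ub_ereal_sup => _ [u Gu <-].
apply: le_trans (h u Gu) _; apply: lee_wpmul2l; first by rewrite lee_fin ltW.
by apply: ereal_sup_ubound; exists u.
Qed.

Lemma E0norm_ge0 (Phi : R -> R) f : (0 <= E0norm G lam Phi f)%E.
Proof.
apply: le_trans (gauge_ge0 Phi (grange G point) f) _.
by apply: ereal_sup_ubound; exists (grange G point) => //; exists point.
Qed.

Lemma lt_scale (M e : R) (x : \bar R) : 0 < M -> (x < (e / M)%:E)%E ->
  (M%:E * x < e%:E)%E.
Proof. by move=> M0; rewrite -lte_pdivlMl // EFinM muleC. Qed.

Lemma contB (f g : T -> R) : continuous f -> continuous g -> continuous (fun x => f x - g x).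
Proof. by move=> cf cg x; exact: (@continuousB _ _ _ f g x (cf x) (cg x)). Qed.
Lemma contD (f g : T -> R) : continuous f -> continuous g -> continuous (fun x => f x + g x).
Proof. by move=> cf cg x; exact: (@continuousD _ _ _ f g x (cf x) (cg x)). Qed.
Lemma contM (f g : T -> R) : continuous f -> continuous g -> continuous (fun x => f x * g x).
Proof. by move=> cf cg x; exact: (@continuousM _ _ f g x (cf x) (cg x)). Qed.

Lemma ccontinuousM (c m : T -> R[i]) : ccontinuous c -> ccontinuous m ->
  ccontinuous (fun z => c z * m z).
Proof.
case=> c1 c2 [m1 m2]; split.
  have -> : (fun x => cre (c x * m x)) =
    (fun x => cre (c x) * cre (m x) - cim (c x) * cim (m x)).
    by apply/funext => x; rewrite /cre /cim; case: (c x) => ? ?; case: (m x) => ? ?.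
  by apply: contB; apply: contM.
have -> : (fun x => cim (c x * m x)) =
  (fun x => cre (c x) * cim (m x) + cim (c x) * cre (m x)).
  by apply/funext => x; rewrite /cre /cim; case: (c x) => ? ?; case: (m x) => ? ?.
by apply: contD; apply: contM.
Qed.

Lemma csupportM (c m : T -> R[i]) :
  csupport (fun z => c z * m z) `<=` csupport c.
Proof.
apply: closure_subset => z /= h; apply/eqP => c0; move: h; by rewrite c0 mul0r eqxx.
Qed.

Lemma CcM (c m : T -> R[i]) : Cc c -> ccontinuous m -> Cc (fun z => c z * m z).
Proof.
case=> cc ck mc; split; first exact: ccontinuousM.
apply: subclosed_compact ck (@csupportM c m); exact: closed_closure.
Qed.


Lemma E0norm_mul (Phi : R -> R) (F m : T -> R[i]) (M : R) :
  Nfunction Phi -> 0 < M -> (forall z, cabs (m z) <= M) ->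
  (E0norm G lam Phi (fun z => (F z * m z)%R) <= M%:E * E0norm G lam Phi F)%E.
Proof.
move=> NP M0 mM; apply: E0norm_le => // u _; apply: gauge_le => // x _.
by rewrite cabsM mulrC ler_wpM2r ?cabs_ge0.
Qed.

Lemma inE0P_mul (Phi : R -> R) P (f m k : T -> R[i]) (M : R) :
  Nfunction Phi -> 0 < M -> ccontinuous m ->
  (forall z, m z = k (grange G z)) -> (forall z, cabs (m z) <= M) ->
  inE0P G lam Phi P f -> inE0P G lam Phi P (fun z => f z * m z).
Proof.
move=> NP M0 mc hm mM [[hL hloc hvan] happ].
have ptw (g : T -> R[i]) x : cabs (g x * m x) <= M * cabs (g x).
  by rewrite cabsM mulrC ler_wpM2r ?cabs_ge0.
have gl (g : T -> R[i]) u :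
    (gauge G lam Phi u (fun z => (g z * m z)%R) <= M%:E * gauge G lam Phi u g)%E.
  by apply: gauge_le => // x _; exact: ptw.
have gdiff (c : T -> R[i]) u : (gauge G lam Phi u (fun x => (f x * m x - c x * m x)%R)
    <= M%:E * gauge G lam Phi u (fun x => (f x - c x)%R))%E.
  by apply: gauge_le => // x _; rewrite -mulrBl; exact: (ptw (fun x => f x - c x)).
split; [split|].
- move=> u Gu; have [[mre mim] [a [a0 ha]]] := hL u Gu; split.
    split.
      apply: (eq_measurable_fun (fun z : borelT T => cre (f z) * cre (k u) - cim (f z) * cim (k u))).
        move=> z; rewrite inE /fiber /= => zf; rewrite (hm z) zf /cre /cim.
        by case: (f z) => ? ?; case: (k u) => ? ?.
      exact: (measurable_realfun.measurable_funB (measurable_realfun.measurable_funM mre (measurable_cst _))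
                (measurable_realfun.measurable_funM mim (measurable_cst _))).
    apply: (eq_measurable_fun (fun z : borelT T => cre (f z) * cim (k u) + cim (f z) * cre (k u))).
      move=> z; rewrite inE /fiber /= => zf; rewrite (hm z) zf /cre /cim.
      by case: (f z) => ? ?; case: (k u) => ? ?.
    exact: (measurable_realfun.measurable_funD (measurable_realfun.measurable_funM mre (measurable_cst _))
              (measurable_realfun.measurable_funM mim (measurable_cst _))).
  exists (a / M); split; first by rewrite divr_gt0.
  apply: le_lt_trans ha; apply: nn_le_integral => x _.
    by rewrite lee_fin Nfun_ge0.
  rewrite lee_fin; apply: Nfun_mono => //.
    by rewrite mulr_ge0 ?cabs_ge0 // divr_ge0 // ltW.
  apply: le_trans (_ : a / M * (M * cabs (f x)) <= _).
    by rewrite ler_wpM2l ?ptw // divr_ge0 // ltW.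
  by rewrite mulrA mulfVK ?gt_eqF.
- move=> u Gu eps e0.
  have [c [cc [U [oU Uu hU]]]] := hloc u Gu (eps / M) (divr_gt0 e0 M0).
  exists (fun z => c z * m z); split; first exact: CcM.
  exists U; split => // v Gv Uv.
  apply: le_lt_trans (gdiff c v) _; exact: lt_scale (hU v Gv Uv).
- move=> eps e0; have [K [cK KG hK]] := hvan (eps / M) (divr_gt0 e0 M0).
  exists K; split => // u Gu nK.
  apply: le_lt_trans (gl f u) _; exact: lt_scale (hK u Gu nK).
- move=> eps e0; have [c [cc cs hc]] := happ (eps / M) (divr_gt0 e0 M0).
  exists (fun z => c z * m z); split; [exact: CcM | exact: subset_trans (@csupportM c m) cs |].
  apply: le_lt_trans (@E0norm_le Phi _ _ M M0 (fun u _ => gdiff c u)) _; exact: lt_scale.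
Qed.

End Gauge.

Section Seqs.
Variable R : realType.

Definition ilv {V : Type} (u v : nat -> V) (n : nat) : V :=
  if odd n then v n./2 else u n./2.

Lemma half_cvg (a : nat -> R) (L : R) : a @ \oo --> L -> (fun N => a N./2) @ \oo --> L.
Proof.
move/cvgrPdist_lt => h; apply/cvgrPdist_lt => e e0.
have [M _ hM] := h e e0; exists M.*2 => // n /= hn; apply: hM => /=.
by rewrite -(half_double M) half_leq.
Qed.

Lemma ilv_sum (u v : nat -> R) N :
  \sum_(n < N) ilv u v n =
  \sum_(k < N./2) (u k + v k) + (if odd N then u N./2 else 0).
Proof.
elim: N => [|N IH]; first by rewrite !big_ord0 /= addr0.
rewrite big_ord_recr /= IH /ilv uphalf_half; case: (odd N) => /=.
  by rewrite add1n big_ord_recr /= addr0 addrA.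
by rewrite add0n addr0.
Qed.

Lemma ilv_cvg (u v : nat -> R) (L : R) :
  (fun N => \sum_(n < N) (u n + v n)) @ \oo --> L -> u @ \oo --> 0 ->
  (fun N => \sum_(n < N) ilv u v n) @ \oo --> L.
Proof.
move=> hA hu.
have -> : (fun N => \sum_(n < N) ilv u v n) =
  (fun N => \sum_(k < N./2) (u k + v k) + (if odd N then u N./2 else 0)).
  by apply/funext => N; rewrite ilv_sum.
rewrite -[L]addr0; apply: cvgD; first exact: (half_cvg _ _ hA).
move/cvgrPdist_lt : hu => h; apply/cvgrPdist_lt => e e0.
have [M _ hM] := h e e0; exists M.*2 => // n /= hn.
case: (odd n); last by rewrite subrr normr0.
apply: hM => /=; by rewrite -(half_double M) half_leq.
Qed.

Local Open Scope ereal_scope.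
Lemma ilv_esum (p q : nat -> \bar R) N :
  \sum_(0 <= n < N.*2) ilv p q n = \sum_(0 <= k < N) (p k + q k).
Proof.
elim: N => [|N IH]; first by rewrite !big_geq.
rewrite doubleS !big_nat_recr //= IH /ilv /= odd_double /= half_double uphalf_double.
by rewrite addeA.
Qed.

Lemma ilv_nneseries (p q a : nat -> \bar R) (C : R) : (0 <= C)%R ->
  (forall n, 0 <= p n) -> (forall n, 0 <= q n) -> (forall n, 0 <= a n) ->
  (forall n, p n + q n <= C%:E * a n) ->
  \sum_(0 <= n <oo) a n < +oo ->
  \sum_(0 <= n <oo) ilv p q n < +oo.
Proof.
move=> C0 p0 q0 a0 pqa afin.
have w0 n : 0 <= ilv p q n by rewrite /ilv; case: odd.
apply: (@le_lt_trans _ _ (C%:E * \sum_(0 <= n <oo) a n)); last first.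
  by apply: lte_mul_pinfty; rewrite ?lee_fin.
apply: lime_le; first exact: is_cvg_nneseries.
exists 0%N => // N _ /=.
apply: le_trans (_ : \sum_(0 <= n < N.*2) ilv p q n <= _).
  rewrite [X in _ <= X](big_cat_nat _ (n := N)) //=; last by rewrite -addnn leq_addr.
  by rewrite leeDl // sume_ge0.
rewrite ilv_esum; apply: le_trans (_ : \sum_(0 <= k < N) C%:E * a k <= _).
  by apply: lee_sum => k _; exact: pqa.
rewrite -ge0_sume_distrr //; apply: lee_wpmul2l; first by rewrite lee_fin.
exact: nneseries_lim_ge.
Qed.

End Seqs.

Section Main.
Variables (R : realType) (T : ptopologicalType) (G : topological_groupoid T)
  (lam : T -> {measure set (borelT T) -> \bar R}).

Lemma comp_bound (f : T -> R) (K : set T) : compact K ->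
  K `<=` unit_space G -> {within unit_space G, continuous f} ->
  exists M : R, 0 <= M /\ forall u, K u -> `|f u| <= M.
Proof.
move=> cK KG fc.
have /compact_bounded [M [Mr hM]] := continuous_compact (continuous_subspaceW KG fc) cK.
exists (`|M| + 1); split; first by rewrite addr_ge0.
move=> u Ku; apply: (hM (`|M| + 1)); last by exists u.
by rewrite (le_lt_trans (real_ler_norm Mr)) // ltrDl.
Qed.

Lemma b_bound (b : T -> R[i]) : C0_units G b ->
  exists M : R, 1 <= M /\ forall u, unit_space G u ->
    `|cre (b u)| <= M /\ `|cim (b u)| <= M.
Proof.
case=> c1 [c2 c3]; have [K [cK KG hK]] := c3 1 ltr01.
have [M1 [M10 h1]] := comp_bound _ _ cK KG c1.
have [M2 [M20 h2]] := comp_bound _ _ cK KG c2.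
exists (M1 + M2 + 1); split; first by rewrite lerDr addr_ge0.
move=> u Gu; have [Ku|nKu] := pselect (K u).
  by split; [have := h1 u Ku|have := h2 u Ku]; lra.
have := hK u Gu nKu; have := @cre_le _ (b u); have := @cim_le _ (b u); rewrite /cre /cim /cabs; lra.
Qed.

Lemma series_term0 (w : nat -> R) (L : R) :
  (fun N => \sum_(n < N) w n) @ \oo --> L -> w @ \oo --> 0.
Proof.
move=> h; apply: cvg_series_cvg_0; apply/cvg_ex; exists L.
have -> : series w = (fun N => \sum_(n < N) w n).
  by apply/funext => N; rewrite /series /= big_mkord.
exact: h.
Qed.

Lemma Rint_eq_scale (mu : {measure set (borelT T) -> \bar R}) D (f1 f2 : T -> R) k :
  (forall y, D y -> f1 y = k * f2 y) -> Rintegral mu D f1 = k * Rintegral mu D f2.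
Proof.
move=> h; rewrite -Rintegral_scale; apply: eq_Rintegral => y; rewrite inE => Dy.
exact: h.
Qed.

Lemma conv_scale (g f g' f' : T -> R[i]) x (a : R) :
  (forall y, fiber G (grange G x) y ->
     g' y * f' (gmul G (ginv G x) y) = Complex a 0 * (g y * f (gmul G (ginv G x) y))) ->
  cre (gconv G lam g' f' x) = a * cre (gconv G lam g f x) /\
  cim (gconv G lam g' f' x) = a * cim (gconv G lam g f x).
Proof.
move=> h; rewrite /gconv /cintegral /cre /cim /=; split; apply: Rint_eq_scale => y Dy;
  rewrite (h y Dy); case: (g y * _) => ? ? /=; ring.
Qed.

Lemma conv_scaleI (g f g' f' : T -> R[i]) x (c : R) :
  (forall y, fiber G (grange G x) y ->
     g' y * f' (gmul G (ginv G x) y) =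
       Complex 0 1 * (Complex c 0 * (g y * f (gmul G (ginv G x) y)))) ->
  cre (gconv G lam g' f' x) = - c * cim (gconv G lam g f x) /\
  cim (gconv G lam g' f' x) = c * cre (gconv G lam g f x).
Proof.
move=> h; rewrite /gconv /cintegral /cre /cim /=; split; apply: Rint_eq_scale => y Dy;
  rewrite (h y Dy); case: (g y * _) => ? ? /=; ring.
Qed.


Lemma assemble (Phi Psi : R -> R) P (h h' : T -> R[i])
  (f g f1 f2 g1 g2 : nat -> T -> R[i]) (M : R) :
  0 < M -> Cc h' ->
  (forall n, inE0P G lam Phi P (f1 n)) -> (forall n, inE0P G lam Phi P (f2 n)) ->
  (forall n, inE0P G lam Psi P (g1 n)) -> (forall n, inE0P G lam Psi P (g2 n)) ->
  (\sum_(0 <= n <oo) (E0norm G lam Phi (f n) * E0norm G lam Psi (g n)) < +oo)%E ->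
  (forall n, E0norm G lam Phi (f1 n) <= M%:E * E0norm G lam Phi (f n))%E ->
  (forall n, E0norm G lam Phi (f2 n) <= M%:E * E0norm G lam Phi (f n))%E ->
  (forall n, E0norm G lam Psi (g1 n) <= M%:E * E0norm G lam Psi (g n))%E ->
  (forall n, E0norm G lam Psi (g2 n) <= M%:E * E0norm G lam Psi (g n))%E ->
  (forall x,
     (fun N => \sum_(n < N) cre (gconv G lam (g n) (f n) x)) @ \oo --> cre (h x) /\
     (fun N => \sum_(n < N) cim (gconv G lam (g n) (f n) x)) @ \oo --> cim (h x)) ->
  (forall x, exists a c : R,
     [/\ forall n, cre (gconv G lam (g1 n) (f1 n) x) = a * cre (gconv G lam (g n) (f n) x) /\
                   cim (gconv G lam (g1 n) (f1 n) x) = a * cim (gconv G lam (g n) (f n) x),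
         forall n, cre (gconv G lam (g2 n) (f2 n) x) = - c * cim (gconv G lam (g n) (f n) x) /\
                   cim (gconv G lam (g2 n) (f2 n) x) = c * cre (gconv G lam (g n) (f n) x),
         cre (h' x) = a * cre (h x) - c * cim (h x) &
         cim (h' x) = a * cim (h x) + c * cre (h x)]) ->
  inAP G lam Phi Psi P h'.
Proof.
move=> M0 ch' ef1 ef2 eg1 eg2 fin bf1 bf2 bg1 bg2 hcv hx.
split => //; exists (ilv f1 f2), (ilv g1 g2); split.
- by move=> n; rewrite /ilv; case: odd.
- by move=> n; rewrite /ilv; case: odd.
- pose p n := (E0norm G lam Phi (f1 n) * E0norm G lam Psi (g1 n))%E.
  pose q n := (E0norm G lam Phi (f2 n) * E0norm G lam Psi (g2 n))%E.
  rewrite (@eq_eseriesr _ _ (ilv p q)); last first.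
    by move=> n _; rewrite /ilv /p /q; case: odd.
  have M0' : (0 <= M%:E)%E by rewrite lee_fin ltW.
  have bnd (F1 G1 : nat -> T -> R[i]) n :
      (E0norm G lam Phi (F1 n) <= M%:E * E0norm G lam Phi (f n))%E ->
      (E0norm G lam Psi (G1 n) <= M%:E * E0norm G lam Psi (g n))%E ->
      (E0norm G lam Phi (F1 n) * E0norm G lam Psi (G1 n) <=
        (M * M)%:E * (E0norm G lam Phi (f n) * E0norm G lam Psi (g n)))%E.
    move=> b1 b2; apply: le_trans (lee_pmul (E0norm_ge0 _ _ _ _ _ _) (E0norm_ge0 _ _ _ _ _ _) b1 b2) _.
    by rewrite muleACA EFinM.
  apply: (@ilv_nneseries _ p q _ (M * M + M * M)) fin.
  + by rewrite addr_ge0 // mulr_ge0 // ltW.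
  + by move=> n; rewrite /p mule_ge0 // E0norm_ge0.
  + by move=> n; rewrite /q mule_ge0 // E0norm_ge0.
  + by move=> n; rewrite mule_ge0 // E0norm_ge0.
  + move=> n; rewrite EFinD ge0_muleDl ?lee_fin ?mulr_ge0 ?(ltW M0) //.
    by apply: leeD; apply: bnd.
- move=> x; have [a [c [h1 h2 hre him]]] := hx x; have [cre_cv cim_cv] := hcv x.
  set C := fun n => gconv G lam (g n) (f n) x.
  split.
  + have -> : (fun N => \sum_(n < N) cre (gconv G lam (ilv g1 g2 n) (ilv f1 f2 n) x)) =
        (fun N => \sum_(n < N) ilv (fun k => a * cre (C k)) (fun k => - c * cim (C k)) n).
      apply/funext => N; apply: eq_bigr => n _; rewrite /ilv.
      by case: odd; [exact: (h2 _).1 | exact: (h1 _).1].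
    rewrite hre; apply: ilv_cvg.
      have -> : (fun N => \sum_(n < N) (a * cre (C n) + - c * cim (C n))) =
          (fun N => a * \sum_(n < N) cre (C n) + - c * \sum_(n < N) cim (C n)).
        by apply/funext => N; rewrite big_split /= -!mulr_sumr.
      rewrite -mulNr; apply: cvgD; [exact: cvgMr cre_cv | exact: cvgMr cim_cv].
    rewrite -(mulr0 a); apply: cvgMr; exact: series_term0 cre_cv.
  + have -> : (fun N => \sum_(n < N) cim (gconv G lam (ilv g1 g2 n) (ilv f1 f2 n) x)) =
        (fun N => \sum_(n < N) ilv (fun k => a * cim (C k)) (fun k => c * cre (C k)) n).
      apply/funext => N; apply: eq_bigr => n _; rewrite /ilv.
      by case: odd; [exact: (h2 _).2 | exact: (h1 _).2].
    rewrite him; apply: ilv_cvg.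
      have -> : (fun N => \sum_(n < N) (a * cim (C n) + c * cre (C n))) =
          (fun N => a * \sum_(n < N) cim (C n) + c * \sum_(n < N) cre (C n)).
        by apply/funext => N; rewrite big_split /= -!mulr_sumr.
      apply: cvgD; [exact: cvgMr cim_cv | exact: cvgMr cre_cv].
    rewrite -(mulr0 a); apply: cvgMr; exact: series_term0 cim_cv.
Qed.

End Main.

Lemma cI_real (R : realType) (c : R) : Complex 0 c = Complex 0 1 * Complex c 0 :> R[i].
Proof. rewrite /GRing.mul /=; congr Complex; ring. Qed.

Lemma cabs_imag (R : realType) (c : R) : cabs (Complex 0 c : R[i]) = `|c|.
Proof. by rewrite /cabs /cre /cim /= expr0n add0r sqrtr_sqr. Qed.

Theorem lemma4p2 (R : realType) (T : ptopologicalType)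
  (G : topological_groupoid T)
  (lam : T -> {measure set (borelT T) -> \bar R})
  (Phi Psi : R -> R) :
  hausdorff_space T -> locally_compact [set: T] -> @second_countable T ->
  left_haar_system G lam ->
  Nfunction Phi -> Nfunction Psi -> complementary Phi Psi ->
  Delta2 T Phi -> Delta2 T Psi ->
  forall (b h : T -> R[i]),
    C0_units G b -> inA G lam Phi Psi h ->
    inA G lam Phi Psi (fun x => b (gsource G x) * h x) /\
    inA G lam Phi Psi (fun x => h x * b (grange G x)).
Proof.
move=> _ _ _ _ NPhi NPsi _ _ _ b h bC [P [KP [ch [f [g [ef eg fin cv]]]]]].
have [M [M1 bM]] := @b_bound R T G b bC.
have M0 : 0 < M by apply: lt_le_trans M1.
case: bC => bc1 [bc2 _].
have inG z : unit_space G (grange G z) by exists z.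
have cr : continuous (fun z => cre (b (grange G z))).
  exact: (@within_comp _ _ _ _ _ _ bc1 (@grange_cont _ G) inG).
have ci : continuous (fun z => cim (b (grange G z))).
  exact: (@within_comp _ _ _ _ _ _ bc2 (@grange_cont _ G) inG).
pose b1 z : R[i] := Complex (cre (b (grange G z))) 0.
pose b2 z : R[i] := Complex (cim (b (grange G z))) 0.
pose b3 z : R[i] := Complex 0 (cim (b (grange G z))).
pose one := fun _ : T => (1 : R[i]).
pose iC := fun _ : T => (Complex 0 1 : R[i]).
have cb1 : ccontinuous b1 by split; [exact: cr | exact: cst_continuous].
have cb2 : ccontinuous b2 by split; [exact: ci | exact: cst_continuous].
have cb3 : ccontinuous b3 by split; [exact: cst_continuous | exact: ci].
have cone : ccontinuous one by split; exact: cst_continuous.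
have ciC : ccontinuous iC by split; exact: cst_continuous.
have bb1 z : cabs (b1 z) <= M by rewrite cabs_real; exact: (bM _ (inG z)).1.
have bb2 z : cabs (b2 z) <= M by rewrite cabs_real; exact: (bM _ (inG z)).2.
have bb3 z : cabs (b3 z) <= M by rewrite cabs_imag; exact: (bM _ (inG z)).2.
have bone z : cabs (one z) <= M.
  by rewrite /one -[1]/(Complex 1 0 : R[i]) cabs_real normr1.
have biC z : cabs (iC z) <= M by rewrite /iC cabs_I.
have hb1 : forall z, b1 z = (fun u => Complex (cre (b u)) 0 : R[i]) (grange G z) by [].
have hb2 z : b2 z = (fun u => Complex (cim (b u)) 0 : R[i]) (grange G z) by [].
have hb3 z : b3 z = (fun u => Complex 0 (cim (b u)) : R[i]) (grange G z) by [].
have hone z : one z = (fun _ => 1 : R[i]) (grange G z) by [].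
have hiC z : iC z = (fun _ => Complex 0 1 : R[i]) (grange G z) by [].
split; exists P; split => //.
- apply: (@assemble R T G lam Phi Psi P h _ f g
     (fun n z => f n z * b1 z) (fun n z => f n z * b2 z)
     (fun n z => g n z * one z) (fun n z => g n z * iC z) M M0).
  + have -> : (fun x => b (gsource G x) * h x) = (fun x => h x * (b \o gsource G) x).
      by apply/funext => x; rewrite mulrC.
    apply: CcM => //; split.
      have -> : (fun x => cre ((b \o gsource G) x)) = (fun x => cre (b (grange G x))) \o ginv G.
        by apply/funext => x /=; rewrite (@grange_inv _ G).
      by move=> x; apply: continuous_comp; [exact: ginv_cont | exact: cr].
    have -> : (fun x => cim ((b \o gsource G) x)) = (fun x => cim (b (grange G x))) \o ginv G.
      by apply/funext => x /=; rewrite (@grange_inv _ G).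
    by move=> x; apply: continuous_comp; [exact: ginv_cont | exact: ci].
  + by move=> n; apply: (@inE0P_mul R T G lam Phi P (f n) b1 (fun u => Complex (cre (b u)) 0 : R[i]) M NPhi M0 cb1 hb1 bb1 (ef n)).
  + by move=> n; apply: (@inE0P_mul R T G lam Phi P (f n) b2 (fun u => Complex (cim (b u)) 0 : R[i]) M NPhi M0 cb2 hb2 bb2 (ef n)).
  + by move=> n; apply: (@inE0P_mul R T G lam Psi P (g n) one (fun _ => 1 : R[i]) M NPsi M0 cone hone bone (eg n)).
  + by move=> n; apply: (@inE0P_mul R T G lam Psi P (g n) iC (fun _ => Complex 0 1 : R[i]) M NPsi M0 ciC hiC biC (eg n)).
  + exact: fin.
  + by move=> n; apply: (@E0norm_mul R T G lam Phi (f n) b1 M NPhi M0 bb1).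
  + by move=> n; apply: (@E0norm_mul R T G lam Phi (f n) b2 M NPhi M0 bb2).
  + by move=> n; apply: (@E0norm_mul R T G lam Psi (g n) one M NPsi M0 bone).
  + by move=> n; apply: (@E0norm_mul R T G lam Psi (g n) iC M NPsi M0 biC).
  + exact: cv.
  + move=> x; exists (cre (b (gsource G x))), (cim (b (gsource G x))); split.
    * move=> n; apply: conv_scale => y hy.
      by rewrite /b1 /one (@key_r _ G _ _ hy); ring.
    * move=> n; apply: conv_scaleI => y hy.
      by rewrite /b2 /iC (@key_r _ G _ _ hy); ring.
    * by rewrite /cre /cim; case: (b _) => ? ?; case: (h x) => ? ?.
    * by rewrite /cre /cim; case: (b _) => ? ?; case: (h x) => ? ?.
- apply: (@assemble R T G lam Phi Psi P h _ f g
     (fun n z => f n z * one z) (fun n z => f n z * one z)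
     (fun n z => g n z * b1 z) (fun n z => g n z * b3 z) M M0).
  + by apply: CcM.
  + by move=> n; apply: (@inE0P_mul R T G lam Phi P (f n) one (fun _ => 1 : R[i]) M NPhi M0 cone hone bone (ef n)).
  + by move=> n; apply: (@inE0P_mul R T G lam Phi P (f n) one (fun _ => 1 : R[i]) M NPhi M0 cone hone bone (ef n)).
  + by move=> n; apply: (@inE0P_mul R T G lam Psi P (g n) b1 (fun u => Complex (cre (b u)) 0 : R[i]) M NPsi M0 cb1 hb1 bb1 (eg n)).
  + by move=> n; apply: (@inE0P_mul R T G lam Psi P (g n) b3 (fun u => Complex 0 (cim (b u)) : R[i]) M NPsi M0 cb3 hb3 bb3 (eg n)).
  + exact: fin.
  + by move=> n; apply: (@E0norm_mul R T G lam Phi (f n) one M NPhi M0 bone).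
  + by move=> n; apply: (@E0norm_mul R T G lam Phi (f n) one M NPhi M0 bone).
  + by move=> n; apply: (@E0norm_mul R T G lam Psi (g n) b1 M NPsi M0 bb1).
  + by move=> n; apply: (@E0norm_mul R T G lam Psi (g n) b3 M NPsi M0 bb3).
  + exact: cv.
  + move=> x; exists (cre (b (grange G x))), (cim (b (grange G x))); split.
    * move=> n; apply: conv_scale => y hy.
      by rewrite /b1 /one hy; ring.
    * move=> n; apply: conv_scaleI => y hy.
      by rewrite /b3 /one hy cI_real; ring.
    * by rewrite /cre /cim; case: (b _) => ? ?; case: (h x) => ? ? /=; ring.
    * by rewrite /cre /cim; case: (b _) => ? ?; case: (h x) => ? ? /=; ring.
Qed.
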